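(* Let $\rho_0,\rho_1,\dots,\rho_n$ be density matrices on a finite-dimensional complex Hilbert space with $\rho_j\rho_k=0$ for all $j\ne k$ in $\{0,1,\dots,n\}$. Let $p_1,\dots,p_n\ge0$ with $\sum_{j=1}^n p_j=1$, let $\epsilon\in[0,1]$, and set $\sigma_j=\epsilon\rho_0+(1-\epsilon)\rho_j$ for $j=1,\dots,n$, $\rho=\sum_{j=1}^n p_j\rho_j$ and $\sigma=\sum_{j=1}^n p_j\sigma_j=\epsilon\rho_0+(1-\epsilon)\rho$. Then for each $\mathcal{F}\in\{\mathcal{F}_1,\mathcal{F}_Q,\mathcal{F}_A\}$, $$\sum_{j=1}^n p_j\,\mathcal{F}(\rho_j,\sigma_j)=\mathcal{F}(\rho,\sigma)=1-\epsilon.$$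
   Context: A density matrix is a positive semidefinite operator of unit trace; $\sqrt{\cdot}$ is the positive semidefinite square root. $\mathcal{F}_1(\rho,\sigma)=(\operatorname{tr}\sqrt{\sqrt{\rho}\sigma\sqrt{\rho}})^2$ (Uhlmann–Jozsa fidelity); $\mathcal{F}_Q(\rho,\sigma)=\min_{0\le s\le1}\operatorname{tr}(\rho^s\sigma^{1-s})$, with powers defined by spectral calculus on the support (so $\rho^0$ is the projector onto the support of $\rho$); $\mathcal{F}_A(\rho,\sigma)=[\operatorname{tr}(\sqrt{\rho}\sqrt{\sigma})]^2$ ($A$-fidelity). *)

(* Defs.v *)
From HB Require Import structures.
From mathcomp Require Import all_boot all_order all_algebra.
From mathcomp Require Import sesquilinear spectral.
From mathcomp Require Import complex.
From mathcomp Require Import classical_sets reals exp.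
Set Implicit Arguments. Unset Strict Implicit. Unset Printing Implicit Defensive.
Import Order.TTheory GRing.Theory Num.Theory.
Local Open Scope ring_scope.
Local Open Scope classical_set_scope.

Section QDefs.
Variable R : realType.
Local Notation C := (R[i]).

Definition adjmx m n (A : 'M[C]_(m, n)) : 'M[C]_(n, m) := map_mx Num.conj A^T.

Definition psdmx d (A : 'M[C]_d) : Prop :=
  adjmx A = A /\ forall v : 'rV[C]_d, 0 <= (v *m A *m adjmx v) 0 0.

Definition density d (A : 'M[C]_d) : Prop := psdmx A /\ \tr A = 1.

Definition funmx d (f : C -> C) (A : 'M[C]_d) : 'M[C]_d :=
  invmx (spectralmx A) *m diag_mx (map_mx f (spectral_diag A)) *m spectralmx A.

(* positive semidefinite square root (eigenvalues of a psd matrix are real >= 0) *)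
Definition sqrtmx d (A : 'M[C]_d) : 'M[C]_d :=
  funmx (fun x : C => ((Num.sqrt (complex.Re x))%:C)%C) A.

(* A^s, s real, defined by spectral calculus on the support of A
   (eigenvalue 0 is sent to 0, so A^0 is the support projector) *)
Definition powmx d (A : 'M[C]_d) (s : R) : 'M[C]_d :=
  funmx (fun x : C => if 0 < complex.Re x then (((complex.Re x) `^ s)%:C)%C else 0) A.

Definition F1 d (rho sigma : 'M[C]_d) : C :=
  (\tr (sqrtmx (sqrtmx rho *m sigma *m sqrtmx rho))) ^+ 2.

(* F_Q(rho, sigma) = min_{0<=s<=1} tr(rho^s sigma^(1-s)); the trace is real
   for psd arguments, and the minimum is written as the infimum (it is attained). *)
Definition FQ d (rho sigma : 'M[C]_d) : C :=
  ((inf [set complex.Re (\tr (powmx rho s *m powmx sigma (1 - s))) | s in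
        [set s : R | 0 <= s <= 1]])%:C)%C.

Definition FA d (rho sigma : 'M[C]_d) : C :=
  (\tr (sqrtmx rho *m sqrtmx sigma)) ^+ 2.

End QDefs.

(* Main.v *)
Require Import Defs.
From HB Require Import structures.
From mathcomp Require Import all_boot all_order all_algebra.
From mathcomp Require Import sesquilinear spectral complex.
From mathcomp Require Import classical_sets reals exp.
From mathcomp Require Import lra.
Import Order.TTheory GRing.Theory Num.Theory.
Local Open Scope ring_scope.

Section Scal.
Variable R : realType.
Local Notation C := (R[i]).

Definition sq (x : C) : C := ((Num.sqrt (complex.Re x))%:C)%C.
Definition pw (t : R) (x : C) : C :=
  if 0 < complex.Re x then (((complex.Re x) `^ t)%:C)%C else 0.
Definition kk (c t : R) : R := if 0 < c then c `^ t else 0.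

Lemma ReM_real (c : R) (x : C) : complex.Re ((c%:C)%C * x) = c * complex.Re x.
Proof. by case: x => a b; rewrite /= mul0r subr0. Qed.

Lemma ge0_C (x : C) : 0 <= x -> x = ((complex.Re x)%:C)%C /\ 0 <= complex.Re x.
Proof.
case: x => a b; rewrite lecE /= => /andP [/eqP hb ha].
by split => //; rewrite hb.
Qed.

Lemma sq0 : sq 0 = 0.
Proof. by rewrite /sq /= sqrtr0. Qed.

Lemma sq_sq (x : C) : 0 <= x -> sq x * sq x = x.
Proof.
move=> /ge0_C [-> h]; rewrite /sq /= -rmorphM /=.
by rewrite -expr2 sqr_sqrtr.
Qed.

Lemma sqZ (c : R) (x : C) : 0 <= c -> sq ((c%:C)%C * x) = ((Num.sqrt c)%:C)%C * sq x.
Proof. by move=> c0; rewrite /sq ReM_real sqrtrM // rmorphM. Qed.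

Lemma sq_sqr (x : C) : 0 <= x -> sq (x * x) = x.
Proof.
move=> /ge0_C [-> h]; rewrite /sq ReM_real.
by rewrite -expr2 sqrtr_sqr ger0_norm. 
Qed.

Lemma pw0 t : pw t 0 = 0.
Proof. by rewrite /pw /= ltxx. Qed.

Lemma pwZ (c t : R) (x : C) : 0 <= c ->
  pw t ((c%:C)%C * x) = ((kk c t)%:C)%C * pw t x.
Proof.
move=> c0; rewrite /pw /kk ReM_real.
case: (ltrP 0 c) => [cp|cn].
  rewrite pmulr_rgt0 //; case: ifP => // xp.
    by rewrite powRM ?rmorphM // ltW.
  by rewrite mulr0.
have -> : c = 0 by apply/le_anti; rewrite cn c0.
by rewrite mul0r ltxx mul0r.
Qed.

Lemma pw_mul (s : R) (x : C) : 0 <= x -> pw s x * pw (1 - s) x = x.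
Proof.
move=> /ge0_C [E h]; rewrite /pw; case: ifP => xp.
  rewrite -rmorphM -powRD; last by apply/implyP => _; rewrite gt_eqF.
  by rewrite addrC subrK powRr1 // -E.
rewrite mul0r E.
have -> : complex.Re x = 0 by apply/le_anti; rewrite h andbT leNgt xp.
by [].
Qed.

Lemma inf_kk (a : R) : 0 <= a <= 1 ->
  inf [set kk a (1 - s) | s in [set s : R | 0 <= s <= 1]]%classic = a.
Proof.
move=> /andP [a0 a1].
set E := ([set kk a (1 - s) | s in [set s : R | 0 <= s <= 1]])%classic.
have Ea : E a.
  exists 0; first by rewrite /= lexx ler01.
  rewrite /kk subr0; case: ifP => [_|/negbT]; first by rewrite powRr1.
  by rewrite -leNgt => h; apply/le_anti; rewrite h a0.
have lb : lbound E a.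
  move=> y [s /andP [s0 s1] <-]; rewrite /kk; case: ifP => ap.
    by apply: ger1_powR; [rewrite ap a1 | lra].
  by move/negbT: ap; rewrite -leNgt.
apply/le_anti/andP; split.
  by apply: ge_inf => //; exists a.
by apply: lb_le_inf => //; exists a.
Qed.

End Scal.
Arguments pw {R}. Arguments kk {R}. Arguments sq {R}.

Section Gen.
Variable R : realType.
Local Notation C := (R[i]).
Variable n : nat.
Local Notation M := ('M[C]_n.+1).

Lemma interp (s : seq C) (f : C -> C) :
  exists q : {poly C}, forall x, x \in s -> q.[x] = f x.
Proof.
elim: s => [|a s [q hq]]; first by exists 0.
case: (boolP (a \in s)) => ain.
  by exists q => x; rewrite inE => /orP [/eqP -> | ]; apply: hq.
set w := \prod_(b <- s) ('X - b%:P).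
have w0 : forall x, x \in s -> w.[x] = 0.
  by move=> x xs; apply/eqP; rewrite -/(root w x) root_prod_XsubC.
have wa : w.[a] != 0 by rewrite -/(root w a) root_prod_XsubC.
exists (q + ((f a - q.[a]) / w.[a]) *: w) => x.
rewrite inE hornerD hornerZ => /orP[/eqP -> | xs].
  by rewrite divfK // addrC subrK.
by rewrite (w0 x xs) mulr0 addr0 hq.
Qed.

Definition spec (A : M) := [seq spectral_diag A 0 i | i <- enum 'I_n.+1].

Lemma specP (A : M) i : spectral_diag A 0 i \in spec A.
Proof. by apply: map_f; rewrite mem_enum. Qed.

Lemma spec_dec (A : M) : A \is normalmx ->
  A = invmx (spectralmx A) *m diag_mx (spectral_diag A) *m spectralmx A.
Proof. by move/orthomx_spectralP. Qed.

Lemma horner_conj (P : M) (D : 'rV[C]_n.+1) q : P \in unitmx ->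
  horner_mx (invmx P *m diag_mx D *m P) q
  = invmx P *m diag_mx (map_mx (horner q) D) *m P.
Proof. by move=> U; rewrite horner_mx_uconjC // horner_mx_diag. Qed.

Lemma funmx_horner (A : M) f (q : {poly C}) : A \is normalmx ->
  (forall x, x \in spec A -> q.[x] = f x) -> funmx f A = horner_mx A q.
Proof.
move=> nA hq; have E := spec_dec _ nA.
have hq' : forall i, q.[spectral_diag A 0 i] = f (spectral_diag A 0 i).
  by move=> i; rewrite hq // specP.
rewrite /funmx [in RHS]E. move: hq' (spectral_unit A).
generalize (spectralmx A) (spectral_diag A) => P D hq' PU.
rewrite (horner_conj P D q PU).
have -> : map_mx (horner q) D = map_mx f D.
  by apply/matrixP => i j; rewrite !mxE ord1 hq'.
by [].
Qed.

Lemma zaux (V : zmodType) (a b x y u : V) :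
  a + y + (x + b) - (x + y) + u = a + u + (b + u) - u.
Proof.
by rewrite [x + b]addrC addrACA [y + x]addrC addrK addrA addrK addrAC.
Qed.

Lemma hornerL (A B : M) p : A *m B = 0 -> horner_mx A p *m B = p.[0] *: B.
Proof.
move=> AB; elim/poly_ind: p => [|p c _].
  by rewrite rmorph0 mul0mx horner0 scale0r.
rewrite rmorphD rmorphM /= horner_mx_X horner_mx_C hornerMXaddC mulr0 add0r.
by rewrite mulmxDl -mulmxE -mulmxA AB mulmx0 add0r mul_scalar_mx.
Qed.

Lemma hornerR (A B : M) p : B *m A = 0 -> B *m horner_mx A p = p.[0] *: B.
Proof.
move=> AB; elim/poly_ind: p => [|p c _].
  by rewrite rmorph0 mulmx0 horner0 scale0r.
rewrite [p * 'X]mulrC rmorphD rmorphM /= horner_mx_X horner_mx_C.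
rewrite hornerD hornerC hornerM hornerX mul0r add0r.
by rewrite mulmxDr -mulmxE mulmxA AB mul0mx add0r mul_mx_scalar.
Qed.

Lemma hornerDm (A B : M) p : A *m B = 0 -> B *m A = 0 ->
  horner_mx (A + B) p = horner_mx A p + horner_mx B p - p.[0] *: 1.
Proof.
move=> AB BA; elim/poly_ind: p => [|p c IH].
  by rewrite !rmorph0 horner0 scale0r !subr0 addr0.
rewrite !rmorphD !rmorphM /= !horner_mx_X !horner_mx_C hornerMXaddC mulr0 add0r.
rewrite IH -!mulmxE !mulmxDl mulNmx !mulmxDr (hornerL _ _ _ AB) (hornerL _ _ _ BA).
rewrite -!scalemxAl !mul1mx.
have -> : c *: (1 : M) = c%:M by rewrite scalemx1.
exact: zaux.
Qed.

Lemma scale_diag (c : C) (D : 'rV[C]_n.+1) : c *: diag_mx D = diag_mx (c *: D).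
Proof.
by apply/matrixP => i j; rewrite !mxE mulrnAr.
Qed.

Lemma funmx_conj (A U : M) (E : 'rV[C]_n.+1) f : A \is normalmx -> U \in unitmx ->
  A = invmx U *m diag_mx E *m U -> funmx f A = invmx U *m diag_mx (map_mx f E) *m U.
Proof.
move=> nA UU hA.
have [q hq] := interp (spec A ++ [seq E 0 i | i <- enum 'I_n.+1]) f.
have hq1 : forall x, x \in spec A -> q.[x] = f x.
  by move=> x xs; apply: hq; rewrite mem_cat xs.
rewrite (funmx_horner A f q nA hq1) [in LHS]hA (horner_conj U E q UU).
have -> : map_mx (horner q) E = map_mx f E.
  apply/matrixP => i j; rewrite !mxE ord1 /= hq // mem_cat; apply/orP; right.
  by apply: map_f; rewrite mem_enum.
by [].
Qed.

Lemma funmx_mul f g (A : M) :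
  funmx f A *m funmx g A = funmx (fun x => f x * g x) A.
Proof.
rewrite /funmx; move: (spectral_unit A).
generalize (spectralmx A) (spectral_diag A) => P D PU.
rewrite !mulmxA (mulmxK PU) -(mulmxA (invmx P) (diag_mx _)) mulmx_diag.
have -> : (\row_j (map_mx f D 0 j * map_mx g D 0 j)) = map_mx (fun x => f x * g x) D.
  by apply/matrixP => i j; rewrite !mxE ord1.
by [].
Qed.

Lemma funmx_eq f g (A : M) :
  (forall i, f (spectral_diag A 0 i) = g (spectral_diag A 0 i)) -> funmx f A = funmx g A.
Proof.
rewrite /funmx; generalize (spectralmx A) (spectral_diag A) => P D h.
have -> : map_mx f D = map_mx g D by apply/matrixP => i j; rewrite !mxE ord1 h.
by [].
Qed.

Lemma funmx_id (A : M) : A \is normalmx -> funmx (fun x => x) A = A.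
Proof.
move=> nA; have E := spec_dec A nA; rewrite [in RHS]E /funmx.
generalize (spectralmx A) (spectral_diag A) => P D.
by rewrite map_mx_id.
Qed.

Lemma funmx_scal (c : C) f (A : M) : funmx (fun x => c * f x) A = c *: funmx f A.
Proof.
rewrite /funmx; generalize (spectralmx A) (spectral_diag A) => P D.
rewrite scalemxAl scalemxAr scale_diag.
have -> : c *: map_mx f D = map_mx (fun x => c * f x) D.
  by apply/matrixP => i j; rewrite !mxE.
by [].
Qed.

Lemma funmxZ (c : C) f (A : M) : A \is normalmx -> c *: A \is normalmx ->
  funmx f (c *: A) = funmx (fun x => f (c * x)) A.
Proof.
move=> nA ncA.
have E : c *: A = invmx (spectralmx A) *m diag_mx (c *: spectral_diag A) *m spectralmx A.
  by rewrite {1}(spec_dec A nA) scalemxAl scalemxAr scale_diag.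
rewrite (funmx_conj _ _ _ f ncA (spectral_unit A) E) /funmx.
move: (spectral_unit A); generalize (spectralmx A) (spectral_diag A) => P D PU.
have -> : map_mx f (c *: D) = map_mx (fun x => f (c * x)) D.
  by apply/matrixP => i j; rewrite !mxE.
by [].
Qed.

Lemma funmx_comp f g (A : M) : funmx g A \is normalmx ->
  funmx f (funmx g A) = funmx (fun x => f (g x)) A.
Proof.
move=> ng.
rewrite (funmx_conj _ _ _ f ng (spectral_unit A) (erefl (funmx g A))) /funmx.
generalize (spectralmx A) (spectral_diag A) => P D.
have -> : map_mx f (map_mx g D) = map_mx (fun x => f (g x)) D.
  by apply/matrixP => i j; rewrite !mxE.
by [].
Qed.

Lemma funmxL f (A B : M) : A \is normalmx -> A *m B = 0 -> f 0 = 0 ->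
  funmx f A *m B = 0.
Proof.
move=> nA AB f0.
have [q hq] := interp (spec A ++ [:: 0]) f.
have hq1 : forall x, x \in spec A -> q.[x] = f x.
  by move=> x xs; apply: hq; rewrite mem_cat xs.
rewrite (funmx_horner A f q nA hq1) (hornerL _ _ q AB) hq ?f0 ?scale0r //.
by rewrite mem_cat mem_head orbT.
Qed.

Lemma funmxR f (A B : M) : A \is normalmx -> B *m A = 0 -> f 0 = 0 ->
  B *m funmx f A = 0.
Proof.
move=> nA AB f0.
have [q hq] := interp (spec A ++ [:: 0]) f.
have hq1 : forall x, x \in spec A -> q.[x] = f x.
  by move=> x xs; apply: hq; rewrite mem_cat xs.
rewrite (funmx_horner A f q nA hq1) (hornerR _ _ q AB) hq ?f0 ?scale0r //.
by rewrite mem_cat mem_head orbT.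
Qed.

Lemma funmxD f (A B : M) : A \is normalmx -> B \is normalmx -> A + B \is normalmx ->
  A *m B = 0 -> B *m A = 0 -> f 0 = 0 ->
  funmx f (A + B) = funmx f A + funmx f B.
Proof.
move=> nA nB nAB AB BA f0.
have [q hq] := interp (spec (A + B) ++ spec A ++ spec B ++ [:: 0]) f.
have h1 : forall x, x \in spec (A + B) -> q.[x] = f x.
  by move=> x xs; apply: hq; rewrite mem_cat xs.
have h2 : forall x, x \in spec A -> q.[x] = f x.
  by move=> x xs; apply: hq; rewrite !mem_cat xs orbT.
have h3 : forall x, x \in spec B -> q.[x] = f x.
  by move=> x xs; apply: hq; rewrite !mem_cat xs !orbT.
rewrite (funmx_horner _ f q nAB h1) (funmx_horner A f q nA h2).
rewrite (funmx_horner B f q nB h3) (hornerDm _ _ q AB BA) hq ?f0 ?scale0r ?subr0 //.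
by rewrite !mem_cat mem_head !orbT.
Qed.

Lemma herm_normal (A : M) : adjmx A = A -> A \is normalmx.
Proof.
move=> h; apply/normalmxP.
have h' : (A ^t Num.conj)%sesqui = A := h.
by rewrite h'.
Qed.

Lemma adjD (A B : M) : adjmx (A + B) = adjmx A + adjmx B.
Proof. by apply/matrixP => i j; rewrite !mxE rmorphD. Qed.

Lemma conj_real (c : R) : Num.conj (c%:C)%C = (c%:C)%C :> C.
Proof. exact: conjc_real. Qed.

Lemma adjZ (c : R) (A : M) : adjmx ((c%:C)%C *: A) = (c%:C)%C *: adjmx A.
Proof. by apply/matrixP => i j; rewrite !mxE rmorphM; congr (_ * _); apply: conjc_real. Qed.

Lemma adjM (A B : M) : adjmx (A *m B) = adjmx B *m adjmx A.
Proof. by rewrite /adjmx trmx_mul map_mxM. Qed.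


Lemma psd_spec (A : M) : psdmx A -> forall i, 0 <= spectral_diag A 0 i.
Proof.
case=> hA pos i; have nA := herm_normal A hA; have E := spec_dec A nA.
have PU := spectral_unitarymx A.
move: E PU; generalize (spectralmx A) (spectral_diag A) => P D E PU.
have PUn := unitarymx_unit PU.
have Pinv : invmx P = (P ^t Num.conj)%sesqui := invmx_unitary PU.
have Dd : diag_mx D = P *m A *m invmx P.
  by rewrite E !mulmxA (mulmxV PUn) mul1mx (mulmxK PUn).
have := pos (row i P).
have -> : (row i P *m A *m adjmx (row i P)) 0 0 = D 0 i.
  transitivity ((P *m A *m invmx P) i i); last by rewrite -Dd mxE eqxx mulr1n.
  rewrite Pinv !mxE; apply: eq_bigr => k _; rewrite !mxE; congr (_ * _).
  by apply: eq_bigr => l _; rewrite !mxE.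
by [].
Qed.

Lemma sqrtmxE (X : M) : sqrtmx X = funmx (@sq R) X.
Proof. by []. Qed.

Lemma powmxE (X : M) t : powmx X t = funmx (pw t) X.
Proof. by []. Qed.

Section Two.
Variables (A B : M) (e : R).
Hypotheses (hA : psdmx A) (trA : \tr A = 1) (hB : adjmx B = B)
  (AB : A *m B = 0) (BA : B *m A = 0) (e0 : 0 <= e) (e1 : e <= 1).

Let a := 1 - e.
Let a0 : 0 <= a. Proof. by rewrite /a subr_ge0. Qed.
Let hAh : adjmx A = A. Proof. by case: hA. Qed.
Let nA : A \is normalmx. Proof. exact: herm_normal. Qed.
Let nB : B \is normalmx. Proof. exact: herm_normal. Qed.
Let neB : (e%:C)%C *: B \is normalmx.
Proof. by apply: herm_normal; rewrite adjZ hB. Qed.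
Let naA : (a%:C)%C *: A \is normalmx.
Proof. by apply: herm_normal; rewrite adjZ hAh. Qed.
Let nS : (e%:C)%C *: B + (a%:C)%C *: A \is normalmx.
Proof. by apply: herm_normal; rewrite adjD !adjZ hB hAh. Qed.
Let eBaA : ((e%:C)%C *: B) *m ((a%:C)%C *: A) = 0.
Proof. by rewrite -scalemxAl -scalemxAr BA !scaler0. Qed.
Let aAeB : ((a%:C)%C *: A) *m ((e%:C)%C *: B) = 0.
Proof. by rewrite -scalemxAl -scalemxAr AB !scaler0. Qed.
Let specA : forall i, 0 <= spectral_diag A 0 i. Proof. exact: psd_spec. Qed.

Lemma sqZmx (X : M) (c : R) : X \is normalmx -> (c%:C)%C *: X \is normalmx -> 0 <= c ->
  funmx (@sq R) ((c%:C)%C *: X) = ((Num.sqrt c)%:C)%C *: funmx (@sq R) X.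
Proof.
move=> nX ncX c0; rewrite (funmxZ _ _ _ nX ncX) -funmx_scal.
by apply: funmx_eq => i; rewrite sqZ.
Qed.

Lemma pwZmx (X : M) (c t : R) : X \is normalmx -> (c%:C)%C *: X \is normalmx -> 0 <= c ->
  funmx (pw t) ((c%:C)%C *: X) = ((kk c t)%:C)%C *: funmx (pw t) X.
Proof.
move=> nX ncX c0; rewrite (funmxZ _ _ _ nX ncX) -funmx_scal.
by apply: funmx_eq => i; rewrite pwZ.
Qed.

Let sAB : funmx (@sq R) A *m B = 0.
Proof. exact: (funmxL _ _ _ nA AB (@sq0 R)). Qed.
Let sAsA : funmx (@sq R) A *m funmx (@sq R) A = A.
Proof.
rewrite funmx_mul -[in RHS](funmx_id _ nA).
by apply: funmx_eq => i; rewrite sq_sq.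
Qed.
Let sAsB : funmx (@sq R) A *m funmx (@sq R) B = 0.
Proof. exact: (funmxR _ _ _ nB sAB (@sq0 R)). Qed.
Let sqS : funmx (@sq R) ((e%:C)%C *: B + (a%:C)%C *: A)
   = ((Num.sqrt e)%:C)%C *: funmx (@sq R) B + ((Num.sqrt a)%:C)%C *: funmx (@sq R) A.
Proof.
rewrite (funmxD _ _ _ neB naA nS eBaA aAeB (@sq0 R)).
by rewrite (sqZmx _ _ nB neB e0) (sqZmx _ _ nA naA a0).
Qed.

Lemma sqrC2 (c : R) : 0 <= c -> (((Num.sqrt c)%:C)%C * 1) ^+ 2 = (c%:C)%C :> C.
Proof. by move=> c0; rewrite mulr1 -rmorphXn /= sqr_sqrtr. Qed.

Lemma two_FA : FA A ((e%:C)%C *: B + ((1 - e)%:C)%C *: A) = ((1 - e)%:C)%C.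
Proof.
rewrite /FA -/a !sqrtmxE sqS mulmxDr -!scalemxAr sAsB sAsA scaler0 add0r.
by rewrite mxtraceZ trA sqrC2.
Qed.

Lemma two_F1 : F1 A ((e%:C)%C *: B + ((1 - e)%:C)%C *: A) = ((1 - e)%:C)%C.
Proof.
rewrite /F1 -/a !sqrtmxE.
have inner : funmx (@sq R) A *m ((e%:C)%C *: B + (a%:C)%C *: A) *m funmx (@sq R) A
    = (a%:C)%C *: (A *m A).
  rewrite mulmxDr mulmxDl -!scalemxAr sAB scaler0 mul0mx add0r -scalemxAl.
  congr (_ *: _).
  move: sAsA; generalize (funmx (@sq R) A) => sA L.
  by rewrite -{1}L !mulmxA L -mulmxA L.
have nAA : A *m A \is normalmx by apply: herm_normal; rewrite adjM hAh.
have naAA : (a%:C)%C *: (A *m A) \is normalmx.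
  by apply: herm_normal; rewrite adjZ adjM hAh.
rewrite inner (sqZmx _ _ nAA naAA a0).
have AAE : A *m A = funmx (fun x => x * x) A by rewrite -funmx_mul funmx_id.
have nf : funmx (fun x => x * x) A \is normalmx by rewrite -AAE.
rewrite AAE (funmx_comp _ _ _ nf).
have -> : funmx (fun x => sq (x * x)) A = funmx (fun x => x) A.
  by apply: funmx_eq => i; rewrite sq_sqr.
by rewrite funmx_id // mxtraceZ trA sqrC2.
Qed.

Lemma two_FQ : FQ A ((e%:C)%C *: B + ((1 - e)%:C)%C *: A) = ((1 - e)%:C)%C.
Proof.
rewrite /FQ -/a.
set E := ([set _ | s in _])%classic.
have -> : E = ([set kk a (1 - s) | s in [set s : R | 0 <= s <= 1]])%classic.
  apply: eq_imagel => s _; rewrite !powmxE.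
  rewrite (funmxD (pw (1 - s)) _ _ neB naA nS eBaA aAeB (pw0 _ _)).
  rewrite (pwZmx _ _ _ nB neB e0) (pwZmx _ _ _ nA naA a0).
  have pAB : funmx (pw s) A *m B = 0 by exact: (funmxL (pw s) _ _ nA AB (pw0 _ _)).
  have pApB : funmx (pw s) A *m funmx (pw (1 - s)) B = 0.
    exact: (funmxR (pw (1 - s)) _ _ nB pAB (pw0 _ _)).
  have pApA : funmx (pw s) A *m funmx (pw (1 - s)) A = A.
    rewrite funmx_mul -[in RHS](funmx_id _ nA).
    by apply: funmx_eq => i; rewrite pw_mul.
  rewrite mulmxDr -!scalemxAr pApB pApA scaler0 add0r mxtraceZ trA mulr1.
  by [].
by rewrite inf_kk // a0 /a lerBlDr lerDl.
Qed.

End Two.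

End Gen.

Lemma adj0 (R : realType) d : adjmx (0 : 'M[R[i]]_d) = 0.
Proof. by apply/matrixP => i j; rewrite !mxE rmorph0. Qed.

Lemma adjD' (R : realType) d (A B : 'M[R[i]]_d) : adjmx (A + B) = adjmx A + adjmx B.
Proof. by apply/matrixP => i j; rewrite !mxE rmorphD. Qed.

Lemma adjZ' (R : realType) d (c : R) (A : 'M[R[i]]_d) :
  adjmx ((c%:C)%C *: A) = (c%:C)%C *: adjmx A.
Proof. by apply/matrixP => i j; rewrite !mxE rmorphM; congr (_ * _); apply: conjc_real. Qed.

Theorem mainTheorem9 (R : realType) (d n : nat)
  (rho0 : 'M[R[i]]_d) (rhos : 'I_n -> 'M[R[i]]_d) (p : 'I_n -> R) (eps : R) :
  density rho0 -> (forall j, density (rhos j)) ->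
  (forall j, rho0 *m rhos j = 0) -> (forall j, rhos j *m rho0 = 0) ->
  (forall j k, j != k -> rhos j *m rhos k = 0) ->
  (forall j, 0 <= p j) -> \sum_(j < n) p j = 1 ->
  0 <= eps <= 1 ->
  let sigmas := fun j => eps%:C%C *: rho0 + (1 - eps)%:C%C *: rhos j in
  let rho := \sum_(j < n) (p j)%:C%C *: rhos j in
  let sigma := \sum_(j < n) (p j)%:C%C *: sigmas j in
  forall F : 'M[R[i]]_d -> 'M[R[i]]_d -> R[i],
    F = @F1 R d \/ F = @FQ R d \/ F = @FA R d ->
    \sum_(j < n) (p j)%:C%C * F (rhos j) (sigmas j) = F rho sigma /\
    F rho sigma = (1 - eps)%:C%C.
Proof.
case: d rho0 rhos => [|d] rho0 rhos.
  move=> [_ tr0]; exfalso; move: tr0; rewrite /mxtrace big_ord0 => /eqP.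
  by rewrite eq_sym oner_eq0.
move=> d0 dj r0j rj0 _ p0 p1 /andP [e0 e1] sigmas rho sigma F hF.
have hB : adjmx rho0 = rho0 by case: d0 => [[]].
have key : forall X : 'M[R[i]]_d.+1, psdmx X -> \tr X = 1 -> X *m rho0 = 0 ->
    rho0 *m X = 0 -> F X (eps%:C%C *: rho0 + (1 - eps)%:C%C *: X) = (1 - eps)%:C%C.
  move=> X hX tX X0 X0'.
  case: hF => [->|[->|->]].
  - exact: two_F1.
  - exact: two_FQ.
  - exact: two_FA.
have adj_sum : forall (G : 'I_n -> 'M[R[i]]_d.+1),
    adjmx (\sum_(j < n) G j) = \sum_(j < n) adjmx (G j).
  by move=> G; apply: (big_morph _ (@adjD' R d.+1) (@adj0 R d.+1)).
have hrho : psdmx rho.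
  split.
    rewrite /rho adj_sum; apply: eq_bigr => j _.
    by rewrite adjZ'; case: (dj j) => [[-> _] _].
  move=> v; rewrite /rho mulmx_sumr mulmx_suml summxE sumr_ge0 // => j _.
  rewrite -scalemxAr -scalemxAl mxE mulr_ge0 //; first by rewrite lecR.
  by case: (dj j) => [[_ ->] _].
have trrho : \tr rho = 1.
  rewrite /rho raddf_sum /=.
  transitivity (\sum_(j < n) (p j)%:C%C).
    by apply: eq_bigr => j _; rewrite mxtraceZ; case: (dj j) => _ ->; rewrite mulr1.
  by rewrite -rmorph_sum p1.
have rr0 : rho *m rho0 = 0.
  by rewrite /rho mulmx_suml big1 // => j _; rewrite -scalemxAl rj0 scaler0.
have r0r : rho0 *m rho = 0.
  by rewrite /rho mulmx_sumr big1 // => j _; rewrite -scalemxAr r0j scaler0.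
have sigmaE : sigma = eps%:C%C *: rho0 + (1 - eps)%:C%C *: rho.
  rewrite /sigma /sigmas /rho.
  under eq_bigr => j _ do rewrite scalerDr.
  rewrite big_split /= -scaler_suml -rmorph_sum p1 scale1r.
  congr (_ + _); rewrite scaler_sumr; apply: eq_bigr => j _.
  by rewrite !scalerA mulrC.
rewrite sigmaE key //; split => //.
transitivity (\sum_(j < n) (p j)%:C%C * (1 - eps)%:C%C).
  apply: eq_bigr => j _; rewrite /sigmas key //; first by case: (dj j) => [[]].
  by case: (dj j).
by rewrite -mulr_suml -rmorph_sum p1 mul1r.
Qed.
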